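(* Let $P\subseteq \mathbb{P}^{n-1}$ be a full-dimensional polytope, let $1\le k\le n$, and let $\mathrm{C}_P^k=(C_{G_1},\ldots,C_{G_f})$ be the vector of Chow forms of $P$, where $f$ is the number of $(n-k-1)$-dimensional faces of $P$. Then for every $V\in \mathrm{Gr}(k,n)$ the vector $\mathrm{C}_P^k(V)$ is not the zero vector, and its evaluations at different representatives of $V$ differ by a nonzero scalar multiple; hence $\mathrm{C}_P^k(V)$ is a well-defined point of $\mathbb{P}^{f-1}$.
   Context: Work over $\mathbb{R}$. $\mathrm{Gr}(k,n)$ is the Grassmannian of $k$-dimensional linear subspaces of $\mathbb{R}^n$; a linear subspace is identified with its image in $\mathbb{P}^{n-1}$, but dimensions of subspaces are always those in $\mathbb{R}^n$. A polytope $P\subseteq\mathbb{P}^{n-1}$ is the image in $\mathbb{P}^{n-1}$ of a cone $\{\sum_{i=1}^m c_iv_i : c_i\ge 0\}$ for finitely many $v_1,\ldots,v_m\in\mathbb{R}^n$ (equivalently, the projectivization of the cone over a polytope lying in an affine hyperplane not through the origin); its faces and their dimensions are those of this polytope. For $V\in\mathrm{Gr}(k,n)$ and $I\in\binom{[n]}{n-k}$, the primal Plücker coordinate $p_I(V)$ is the maximal minor on columns $I$ of an $(n-k)\times n$ matrix $N$ with $V=\ker N$ (well defined up to a common nonzero scalar). For an $(n-k)\times n$ matrix $M$, $q_I(M)$ denotes its maximal minor on columns $I$. Vector of Chow forms: fix an ordering $G_1,\ldots,G_f$ of the $(n-k-1)$-dimensional faces of $P$; for each $G_i$ choose $n-k$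 linearly independent vertices (as vectors in $\mathbb{R}^n$) $v^i_1,\ldots,v^i_{n-k}$ of $G_i$ and let $M^i$ be the $(n-k)\times n$ matrix with rows $v^i_1,\ldots,v^i_{n-k}$ in this order. The Chow form of $G_i$ is $C_{G_i}(V)=\sum_{I\in\binom{[n]}{n-k}} q_I(M^i)\,p_I(V)$; it vanishes exactly when $V$ meets the linear span of $G_i$ nontrivially. The vector of Chow forms is $\mathrm{C}_P^k=(C_{G_1},\ldots,C_{G_f})$. *)

(* Defs.v *)
From HB Require Import structures.
From mathcomp Require Import all_boot all_order all_algebra.
Set Implicit Arguments. Unset Strict Implicit. Unset Printing Implicit Defensive.
Import Order.TTheory GRing.Theory Num.Theory.
Local Open Scope ring_scope.

Section Chow.
Variable R : realFieldType.

(* The polytope P is the projectivization of the cone generated by the rows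
   v_i = row i A of A : 'M_(m,n).  It is the cone over a polytope lying in an
   affine hyperplane {l = 1} not through the origin: every nonzero generator
   takes a positive value on l. *)
Definition pointed_gens (m n : nat) (A : 'M[R]_(m, n)) : Prop :=
  exists l : 'cV[R]_n, forall i : 'I_m, row i A != 0 -> 0 < (row i A *m l) 0 0.

Definition full_dim (m n : nat) (A : 'M[R]_(m, n)) : Prop := \rank A = n.

(* Faces of P correspond to faces of the cone, i.e. intersections of the cone
   with supporting hyperplanes {l' = 0}, l' >= 0 on the cone (l' = 0 gives P
   itself, a strictly positive l' gives the empty face / the apex).  A face is
   recorded by the set of indices of generators lying in it; this determines
   the face (the face is the cone over these generators). *)
Definition is_face (m n : nat) (A : 'M[R]_(m, n)) (S : {set 'I_m}) : Prop :=
  exists l : 'cV[R]_n,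
    (forall i : 'I_m, 0 <= (row i A *m l) 0 0) /\
    S = [set i : 'I_m | (row i A *m l) 0 0 == 0].

(* dimension of the linear span of a face; the face (as a subset of P^{n-1})
   has dimension face_rank - 1. *)
Definition face_rank (m n : nat) (A : 'M[R]_(m, n)) (S : {set 'I_m}) : nat :=
  \rank (\matrix_(i < m) (if i \in S then row i A else 0)).

Definition is_vertex_vec (m n : nat) (A : 'M[R]_(m, n)) (S : {set 'I_m})
    (w : 'rV[R]_n) : Prop :=
  exists T : {set 'I_m}, [/\ is_face A T, face_rank A T = 1%N, T \subset S &
    exists j : 'I_m, exists c : R,
      [/\ j \in T, row j A != 0, c != 0 & w = c *: row j A]].

Definition colsel (n : nat) (I : {set 'I_n}) (j : nat) : option 'I_n :=
  nth None [seq Some c | c <- enum I] j.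

Definition minor (p n : nat) (M : 'M[R]_(p, n)) (I : {set 'I_n}) : R :=
  \det (\matrix_(i < p, j < p)
          (if colsel I j is Some c then M i c else 0)).

(* primal Pluecker coordinate p_I(V) computed from a matrix N with V = ker N *)
Definition pluecker (p n : nat) (N : 'M[R]_(p, n)) (I : {set 'I_n}) : R :=
  minor N I.

(* kernel of N : 'M_(p,n) (column kernel), as a row space: u with N u^T = 0,
   i.e. u *m N^T = 0 *)
Definition kerN (p n : nat) (N : 'M[R]_(p, n)) : 'M[R]_n := kermx N^T.

Definition chow_form (p n : nat) (M N : 'M[R]_(p, n)) : R :=
  \sum_(I : {set 'I_n} | #|I| == p) minor M I * pluecker N I.

Definition chow_choice (m n k : nat) (A : 'M[R]_(m, n))
    (M : {set 'I_m} -> 'M[R]_(n - k, n)) : Prop :=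
  forall S : {set 'I_m}, is_face A S -> face_rank A S = (n - k)%N ->
    row_free (M S) /\ forall r : 'I_(n - k), is_vertex_vec A S (row r (M S)).

End Chow.

(* Main.v *)
Require Import Defs.
From HB Require Import structures.
From mathcomp Require Import all_boot all_order all_algebra.
From mathcomp Require Import fingroup perm.
From mathcomp Require Import zify ring lra.
Set Implicit Arguments. Unset Strict Implicit. Unset Printing Implicit Defensive.
Import Order.TTheory GRing.Theory Num.Theory.
Local Open Scope ring_scope.

Section CB.
Variable R : realFieldType.
Variables (p n : nat) (x0 : 'I_n).

Definition sel (I : {set 'I_n}) (j : 'I_p) : 'I_n := nth x0 (enum I) j.

Lemma colselE (I : {set 'I_n}) (j : 'I_p) : #|I| = p -> colsel I j = Some (sel I j).
Proof.
move=> HI; rewrite /colsel /sel (nth_map x0) //.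
by rewrite -cardE HI.
Qed.

Lemma sel_inj (I : {set 'I_n}) : #|I| = p -> injective (sel I).
Proof.
move=> HI i j /eqP; rewrite /sel nth_uniq ?enum_uniq -?cardE ?HI //.
by move/eqP/val_inj.
Qed.

Lemma sel_mem (I : {set 'I_n}) j : #|I| = p -> sel I j \in I.
Proof. by move=> HI; rewrite /sel -mem_enum mem_nth // -cardE HI. Qed.

Lemma minorE (M : 'M[R]_(p, n)) (I : {set 'I_n}) : #|I| = p ->
  minor M I = \det (\matrix_(i, j) M i (sel I j)).
Proof.
move=> HI; rewrite /minor; congr (\det _); apply/matrixP => i j.
by rewrite !mxE colselE.
Qed.

Definition Dn (N : 'M[R]_(p, n)) (f : {ffun 'I_p -> 'I_n}) :=
  \det (\matrix_(i, j) N j (f i)).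

Lemma detLHS (M N : 'M[R]_(p, n)) :
  \det (M *m N^T) = \sum_(f : {ffun 'I_p -> 'I_n}) (\prod_i M i (f i)) * Dn N f.
Proof.
rewrite {1}/determinant.
under eq_bigr => s _.
  under eq_bigr => i _ do rewrite mxE.
  rewrite bigA_distr_bigA mulr_sumr.
  over.
rewrite exchange_big /=; apply: eq_bigr => f _.
rewrite /Dn /determinant mulr_sumr; apply: eq_bigr => s _.
rewrite big_split /= mulrCA; congr (_ * (_ * _)).
by apply: eq_bigr => i _; rewrite !mxE.
Qed.

Lemma Dn0 (N : 'M[R]_(p, n)) (f : {ffun 'I_p -> 'I_n}) : ~~ injectiveb f -> Dn N f = 0.
Proof.
case/injectivePn => i1 [i2 ne feq].
by apply: (determinant_alternate ne) => j; rewrite !mxE feq.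
Qed.

Definition hh (x : ({set 'I_n} * 'S_p)%type) : {ffun 'I_p -> 'I_n} :=
  [ffun i => sel x.1 (x.2 i)].

Definition Aset := [set x : ({set 'I_n} * 'S_p)%type | #|x.1| == p].

Lemma hh_img_set x : x \in Aset -> [set hh x i | i : 'I_p] = x.1.
Proof.
case: x => I s; rewrite inE /= => /eqP HI; apply/setP => c; apply/imsetP/idP.
  by case=> i _ ->; rewrite ffunE sel_mem.
move=> cI; have hc : (index c (enum I) < p)%N.
  by rewrite -HI cardE index_mem mem_enum.
exists (s^-1 (Ordinal hc))%g => //.
by rewrite ffunE permKV /sel /= nth_index // mem_enum.
Qed.

Lemma hh_inj : {in Aset &, injective hh}.
Proof.
move=> [I s] [J t] HA HB eqh.
have eIJ : I = J by rewrite -[I](hh_img_set HA) -[J](hh_img_set HB) eqh.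
subst J; congr (_, _); apply/permP => i.
move: HA; rewrite inE => /eqP HI.
have := congr1 (fun f : {ffun _ -> _} => f i) eqh; rewrite !ffunE /=.
by move/(sel_inj HI).
Qed.

Lemma hh_img : hh @: Aset = [set f : {ffun 'I_p -> 'I_n} | injectiveb f].
Proof.
apply/setP => f; rewrite inE; apply/imsetP/idP.
  case=> [[I s]] HA ->; apply/injectiveP => i j; rewrite !ffunE /=.
  move: HA; rewrite inE => /eqP HI /(sel_inj HI).
  exact: perm_inj.
move/injectiveP => finj.
pose I := [set f i | i : 'I_p].
have HI : #|I| = p by rewrite card_imset // card_ord.
have hc i : (index (f i) (enum I) < p)%N.
  have : (index (f i) (enum I) < #|I|)%N.
    by rewrite cardE index_mem mem_enum; apply: imset_f.
  by rewrite HI.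
pose g i := Ordinal (hc i).
have selg i : sel I (g i) = f i by rewrite /sel nth_index // mem_enum imset_f.
have ginj : injective g.
  by move=> i j eg; apply: finj; rewrite -selg eg selg.
exists (I, perm ginj); first by rewrite inE HI.
by apply/ffunP => i; rewrite ffunE /= permE selg.
Qed.

Lemma CB_x0 (M N : 'M[R]_(p, n)) : chow_form M N = \det (M *m N^T).
Proof.
rewrite detLHS (bigID (fun f : {ffun 'I_p -> 'I_n} => injectiveb f)) /=.
rewrite [X in _ + X]big1 ?addr0; last by move=> f /Dn0 ->; rewrite mulr0.
have -> : \sum_(f : {ffun 'I_p -> 'I_n} | injectiveb f) (\prod_i M i (f i)) * Dn N f =
          \sum_(f in hh @: Aset) (\prod_i M i (f i)) * Dn N f.
  by apply: eq_bigl => f; rewrite hh_img inE.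
rewrite big_imset /=; last exact: hh_inj.
pose F := fun (I : {set 'I_n}) (s : 'S_p) =>
  (\prod_i M i (hh (I, s) i)) * Dn N (hh (I, s)).
symmetry; transitivity (\sum_(x : ({set 'I_n} * 'S_p)%type | (#|x.1| == p) && true) F x.1 x.2).
  by apply: eq_big => [x|[I s] _]; rewrite ?inE ?andbT.
rewrite -(pair_big_dep (fun I : {set 'I_n} => #|I| == p) (fun _ _ => true)) /F /=.
symmetry; rewrite /chow_form /pluecker; apply: eq_bigr => I /eqP HI.
rewrite !minorE //.
have Dns : forall s : 'S_p, Dn N (hh (I, s)) =
    (-1) ^+ s * \det (\matrix_(i, j) N i (sel I j)).
  move=> s; rewrite /Dn.
  have -> : \matrix_(i, j) N j (hh (I, s) i) =
            row_perm s (\matrix_(i, j) N i (sel I j))^T.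
    by apply/matrixP => i j; rewrite !mxE ffunE.
  by rewrite row_permE det_mulmx det_perm det_tr.
under eq_bigr => s _ do rewrite Dns.
rewrite {1}/determinant mulr_suml; apply: eq_bigr => s _.
rewrite -mulrA mulrCA; congr (_ * _).
by apply: eq_bigr => i _; rewrite mxE ffunE.
Qed.

End CB.

Lemma CB (R : realFieldType) p n (M N : 'M[R]_(p, n)) :
  chow_form M N = \det (M *m N^T).
Proof.
case: n M N => [|n] M N; last exact: (CB_x0 ord0).
case: p M N => [|p] M N.
  rewrite /chow_form det_mx00 (big_pred1 set0); last by move=> I; rewrite cards_eq0.
  by rewrite /pluecker /minor !det_mx00 mulr1.
rewrite /chow_form big_pred0; last first.
  move=> I; apply/negbTE; have := max_card I; rewrite card_ord leqn0.
  by move/eqP->.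
by rewrite (thinmx0 M) mul0mx det0.
Qed.

Section Geo.
Variable R : realFieldType.
Variables (m n : nat).
Implicit Types (A : 'M[R]_(m, n)) (V : 'M[R]_n) (S T : {set 'I_m}).

Definition ev (a : 'rV[R]_n) (l : 'cV[R]_n) : R := (a *m l) 0 0.
Definition subm A (S : {set 'I_m}) : 'M[R]_(m, n) :=
  \matrix_(i < m) (if i \in S then row i A else 0).
Definition tight A (l : 'cV[R]_n) : {set 'I_m} := [set i | ev (row i A) l == 0].
Definition cone A (l : 'cV[R]_n) := forall i, 0 <= ev (row i A) l.

Lemma evE A l i : ev (row i A) l = (A *m l) i 0.
Proof. by rewrite /ev -row_mul mxE. Qed.

Lemma evD a l1 l2 : ev a (l1 + l2) = ev a l1 + ev a l2.
Proof. by rewrite /ev mulmxDr mxE. Qed.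

Lemma evZ a c l : ev a (c *: l) = c * ev a l.
Proof. by rewrite /ev -scalemxAr mxE. Qed.

Lemma evN a l : ev a (- l) = - ev a l.
Proof. by rewrite /ev mulmxN mxE. Qed.

Lemma ev0l l : ev 0 l = 0.
Proof. by rewrite /ev mul0mx mxE. Qed.

Lemma rows0 (B : 'M[R]_(m, n)) l : (forall i, ev (row i B) l = 0) -> B *m l = 0.
Proof.
by move=> H; apply/matrixP => i j; rewrite (ord1 j) -evE H mxE.
Qed.

Lemma row_subm A S i : row i (subm A S) = if i \in S then row i A else 0.
Proof. by rewrite rowK. Qed.

Lemma subm_sub A S : (subm A S <= A)%MS.
Proof.
by apply/row_subP => i; rewrite row_subm; case: ifP => _; rewrite ?sub0mx ?row_sub.
Qed.

Lemma row_sub_subm A S i : i \in S -> (row i A <= subm A S)%MS.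
Proof. by move=> iS; rewrite -[row i A](_ : row i (subm A S) = _) ?row_sub // row_subm iS. Qed.

Lemma subm_mono A S T : S \subset T -> (subm A S <= subm A T)%MS.
Proof.
move=> ST; apply/row_subP => i; rewrite row_subm; case: ifP => iS; last exact: sub0mx.
by apply: row_sub_subm; apply: (subsetP ST).
Qed.

Lemma col_mx_mono V (B B' : 'M[R]_(m, n)) : (B <= B')%MS -> (col_mx V B <= col_mx V B')%MS.
Proof.
move=> BB; rewrite col_mx_sub -!addsmxE addsmxSl /=.
exact: submx_trans BB (addsmxSr _ _).
Qed.

Lemma sub_mul0 p1 p2 (X : 'M[R]_(p1, n)) (Y : 'M[R]_(p2, n)) (d : 'cV[R]_n) :
  (X <= Y)%MS -> Y *m d = 0 -> X *m d = 0.
Proof. by case/submxP => D -> Yd; rewrite -mulmxA Yd mulmx0. Qed.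

Lemma KL V (B : 'M[R]_(m, n)) : (\rank (col_mx V B) < n)%N ->
  exists d : 'cV[R]_n, [/\ d != 0, V *m d = 0 & B *m d = 0].
Proof.
move=> Hr; set X := col_mx V B.
have : kermx X^T != 0.
  by rewrite kermx_eq0 /row_free mxrank_tr neq_ltn Hr.
case/rowV0Pn => u /sub_kermxP Hu nz.
exists u^T; have : X *m u^T = 0 :> 'M_(n + m, 1) by rewrite -[X]trmxK -trmx_mul Hu trmx0.
rewrite mul_col_mx => /eqP; rewrite col_mx_eq0 => /andP[/eqP -> /eqP ->].
by rewrite trmx_eq0.
Qed.

Lemma FL V (B : 'M[R]_(m, n)) (d : 'cV[R]_n) : \rank (col_mx V B) = n ->
  V *m d = 0 -> B *m d = 0 -> d = 0.
Proof.
move=> Hr Vd Bd.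
have : (1%:M <= col_mx V B)%MS by rewrite sub1mx /row_full Hr.
move/sub_mul0 => /(_ d); rewrite mul1mx; apply.
by rewrite mul_col_mx Vd Bd col_mx0.
Qed.

Lemma tight_rows0 A l : subm A (tight A l) *m l = 0.
Proof.
apply: rows0 => i; rewrite row_subm; case: ifP; last by rewrite ev0l.
by rewrite inE => /eqP.
Qed.

Lemma LP V A : \rank (col_mx V A) = n -> forall p, cone A p ->
  exists g, [/\ cone A g, \rank (col_mx V (subm A (tight A g))) = n &
                V *m (g - p) = 0].
Proof.
move=> HA.
suff H : forall t p, (n - \rank (col_mx V (subm A (tight A p))) <= t)%N -> cone A p ->
  exists g, [/\ cone A g, \rank (col_mx V (subm A (tight A g))) = n &
                V *m (g - p) = 0].
  by move=> p; apply: (H n); rewrite leq_subr.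
elim=> [|t IH] p Ht Hp.
  exists p; split => //; last by rewrite subrr mulmx0.
  by apply/eqP; rewrite eqn_leq rank_leq_col /= -subn_eq0 -leqn0.
set T := tight A p; set X := col_mx V (subm A T).
have [Xn|Xlt] := eqVneq (\rank X) n.
  by exists p; split => //; rewrite subrr mulmx0.
have Xlt' : (\rank X < n)%N by rewrite ltn_neqAle Xlt rank_leq_col.
have [d [dnz Vd Bd]] := KL Xlt'.
have dT i : i \in T -> ev (row i A) d = 0.
  move=> iT; have := congr1 (fun Y : 'M[R]_(m, 1) => Y i 0) Bd.
  by rewrite -evE row_subm iT mxE.
have [j Hj] : exists j, ev (row j A) d != 0.
  case: (pickP (fun j => ev (row j A) d != 0)) => [j Hj|H0]; first by exists j.
  case/eqP: dnz; apply: (FL HA Vd); apply: rows0 => i.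
  by move: (H0 i) => /negbFE/eqP.
have [e [Ve eT Hje]] : exists e : 'cV[R]_n,
    [/\ V *m e = 0, forall i, i \in T -> ev (row i A) e = 0 & ev (row j A) e < 0].
  case: (ltrP (ev (row j A) d) 0) => hd.
    by exists d; split.
  exists (- d); split; first by rewrite mulmxN Vd oppr0.
    by move=> i iT; rewrite evN dT ?oppr0.
  by rewrite evN oppr_lt0 lt_def Hj hd.
pose ratio i := ev (row i A) p / - ev (row i A) e.
case: (@arg_minP _ _ _ j (fun i => ev (row i A) e < 0) ratio Hje) => i0 Hi0 Hmin.
set s := ratio i0.
have s0 : 0 <= s by rewrite /s /ratio divr_ge0 // oppr_ge0 ltW.
pose p' := p + s *: e.
have evp' i : ev (row i A) p' = ev (row i A) p + s * ev (row i A) e.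
  by rewrite evD evZ.
have Hp' : cone A p'.
  move=> i; rewrite evp'; case: (ltrP (ev (row i A) e) 0) => hi.
    have := Hmin i hi; rewrite /ratio ler_pdivlMr ?oppr_gt0 // mulrN.
    rewrite -/s => h; rewrite -[X in 0 <= X]opprK oppr_ge0 opprD lerBlDr add0r lerNl; exact: h.
  by apply: addr_ge0; [apply: Hp | apply: mulr_ge0].
have i0t : i0 \in tight A p'.
  rewrite inE evp' /s /ratio; apply/eqP.
  have hne : ev (row i0 A) e != 0 by rewrite lt_eqF.
  by field.
have i0T : i0 \notin T.
  by apply/negP => /eT h; move: Hi0; rewrite h ltxx.
have TT' : T \subset tight A p'.
  apply/subsetP => i iT; rewrite inE evp' eT // mulr0 addr0.
  by move: iT; rewrite inE.
set X' := col_mx V (subm A (tight A p')).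
have XX' : (X <= X')%MS by apply: col_mx_mono; apply: subm_mono.
have nX'X : ~~ (X' <= X)%MS.
  apply/negP => hX.
  have : (row i0 A <= X)%MS.
    apply: submx_trans hX; apply: submx_trans (row_sub_subm A i0t) _.
    by rewrite -addsmxE addsmxSr.
  move/sub_mul0 => /(_ e).
  have -> : X *m e = 0.
    rewrite mul_col_mx Ve; apply/eqP; rewrite col_mx_eq0 eqxx /=; apply/eqP.
    by apply: rows0 => i; rewrite row_subm; case: ifP => [/eT|_]; rewrite ?ev0l.
  move=> /(_ erefl) h0; move: Hi0; rewrite /ev h0 mxE ltxx //.
have rlt : (\rank X < \rank X')%N.
  by rewrite (ltn_leqif (mxrank_leqif_sup XX')).
have Ht' : (n - \rank X' <= t)%N.
  have := rank_leq_col X'; move: Ht rlt Xlt'; rewrite -/T -/X; lia.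
have [g [Hg1 Hg2 Hg3]] := IH p' Ht' Hp'.
exists g; split => //.
have -> : g - p = (g - p') + s *: e by rewrite /p' opprD addrA subrK.
by rewrite mulmxDr Hg3 add0r -scalemxAr Ve scaler0.
Qed.

Lemma bigK (P : pred 'I_m) (e f : 'I_m -> R) : (forall i, P i -> 0 < e i) ->
  exists K, 0 < K /\ forall i, P i -> 0 < K * e i + f i.
Proof.
move=> He; set K := 1 + \sum_(i | P i) `|f i| / e i.
have S0 : 0 <= \sum_(i | P i) `|f i| / e i.
  by apply: sumr_ge0 => i Pi; rewrite divr_ge0 // ltW // He.
exists K; split; first by rewrite /K ltr_pwDl.
move=> i Pi; have ei := He i Pi.
have Hle : `|f i| / e i <= \sum_(j | P j) `|f j| / e j.
  rewrite (bigD1 i) //= lerDl; apply: sumr_ge0 => j /andP[Pj _].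
  by rewrite divr_ge0 // ltW // He.
have H1 : (1 + `|f i| / e i) * e i <= K * e i.
  by rewrite ler_pM2r // /K lerD2l.
have H2 : (1 + `|f i| / e i) * e i = e i + `|f i|.
  by rewrite mulrDl mul1r divfK // gt_eqF.
rewrite H2 in H1; have H3 : - f i <= `|f i| by rewrite -normrN ler_norm.
lra.
Qed.

Lemma wwT (w : 'rV[R]_n) : w != 0 -> 0 < ev w w^T.
Proof.
move=> wnz; rewrite /ev mxE.
have H0 : forall j : 'I_n, true -> 0 <= w 0 j * w^T j 0.
  by move=> j _; rewrite mxE -expr2 sqr_ge0.
rewrite lt_def sumr_ge0 // andbT; apply/negP => /eqP /(psumr_eq0P H0) Hj.
case/eqP: wnz; apply/matrixP => i j; rewrite (ord1 i) mxE.
by move: (Hj j erefl); rewrite mxE -expr2 => /eqP; rewrite sqrf_eq0 => /eqP.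
Qed.

Lemma exq A (l0 : 'cV[R]_n) (w : 'rV[R]_n) :
  (forall i, row i A != 0 -> 0 < ev (row i A) l0) -> w != 0 ->
  exists q, (forall i, row i A != 0 -> 0 < ev (row i A) q) /\ ev w q != 0.
Proof.
move=> Hl0 wnz.
have [wl0|wl0] := eqVneq (ev w l0) 0; last by exists l0.
have [K [K0 HK]] := bigK (fun i => ev (row i A) w^T) Hl0.
exists (K *: l0 + w^T); split.
  by move=> i Hi; rewrite evD evZ; apply: HK.
by rewrite evD evZ wl0 mulr0 add0r gt_eqF // wwT.
Qed.

Lemma descent A V k (l0 : 'cV[R]_n) :
  (forall i, row i A != 0 -> 0 < ev (row i A) l0) -> \rank V = k ->
  forall l, cone A l -> \rank (col_mx V (subm A (tight A l))) = n ->
  (n - k < \rank (subm A (tight A l)))%N ->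
  exists l', [/\ cone A l', \rank (col_mx V (subm A (tight A l'))) = n &
     (\rank (subm A (tight A l')) < \rank (subm A (tight A l)))%N].
Proof.
move=> Hl0 Vk l Hl Hfull Hgt.
set T := tight A l; set B := subm A T.
have rsum := mxrank_sum_cap V B.
have radd : \rank (V + B)%MS = n by rewrite addsmxE.
have capnz : (V :&: B)%MS != 0.
  rewrite -mxrank_eq0; move: rsum; rewrite radd Vk; move: Hgt; rewrite -/T -/B.
  lia.
case/rowV0Pn: capnz => w; rewrite sub_capmx => /andP[wV wB] wnz.
have [q [Hq wq]] := exq Hl0 wnz.
have HBq : cone B q.
  move=> i; rewrite row_subm; case: ifP => _; last by rewrite ev0l.
  have [->|nz] := eqVneq (row i A) 0; first by rewrite ev0l.
  exact: ltW (Hq i nz).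
have HBfull : \rank (col_mx V B) = n by [].
have [g [Hg1 Hg2 Hg3]] := LP HBfull HBq.
have Hnt : forall i, i \notin T -> 0 < ev (row i A) l.
  by move=> i; rewrite inE lt_def => -> /=; apply: Hl.
have [K [K0 HK]] := bigK (fun i => ev (row i A) g) Hnt.
set l' := K *: l + g.
have evl' i : ev (row i A) l' = K * ev (row i A) l + ev (row i A) g.
  by rewrite evD evZ.
have Tl i : i \in T -> ev (row i A) l = 0 by rewrite inE => /eqP.
have Hl' : cone A l'.
  move=> i; rewrite evl'; have [iT|iT] := boolP (i \in T).
    by rewrite Tl // mulr0 add0r; move: (Hg1 i); rewrite row_subm iT.
  exact: ltW (HK i iT).
have Esub : subm A (tight A l') = subm B (tight B g).
  apply/row_matrixP => i; rewrite !row_subm !inE evl'.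
  have [iT|iT] := boolP (i \in T).
    by rewrite Tl // mulr0 add0r row_subm iT eqxx.
  have nt : ev (row i A) l != 0 by move: iT; rewrite inE.
  rewrite gt_eqF ?HK // (negPf nt); by case: ifP.
exists l'; split => //; first by rewrite Esub.
rewrite Esub -/B.
have sBB := subm_sub B (tight B g).
rewrite (ltn_leqif (mxrank_leqif_sup sBB)); apply/negP => hB.
have wB' := submx_trans wB hB.
have := sub_mul0 wB' (tight_rows0 B g).
have -> : w *m g = w *m q + w *m (g - q) by rewrite -mulmxDr addrC subrK.
rewrite (sub_mul0 wV Hg3) addr0 => /(congr1 (fun Y : 'M[R]_1 => Y 0 0)).
by rewrite [X in _ = X]mxE => h; move: wq; rewrite /ev h eqxx.
Qed.

Lemma rank_lb A V l : \rank (col_mx V (subm A (tight A l))) = n ->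
  (n <= \rank V + \rank (subm A (tight A l)))%N.
Proof.
move=> H; rewrite -{1}H -addsmxE.
exact: (mxrank_adds_leqif V (subm A (tight A l))).
Qed.

Lemma exists_face A V k : pointed_gens A -> full_dim A -> \rank V = k ->
  exists l, [/\ cone A l, \rank (col_mx V (subm A (tight A l))) = n &
                \rank (subm A (tight A l)) = (n - k)%N].
Proof.
case=> l0 Hl0 HA Vk.
suff H : forall r l, cone A l -> \rank (col_mx V (subm A (tight A l))) = n ->
    (\rank (subm A (tight A l)) <= r)%N ->
  exists l, [/\ cone A l, \rank (col_mx V (subm A (tight A l))) = n &
                \rank (subm A (tight A l)) = (n - k)%N].
  have c0 : cone A 0 by move=> i; rewrite /ev mulmx0 mxE.
  have E0 : subm A (tight A 0) = A.
    apply/row_matrixP => i; rewrite row_subm inE /ev mulmx0 mxE eqxx //.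
  apply: (H _ 0 c0) => //; rewrite E0.
  apply/eqP; rewrite eqn_leq rank_leq_col /=; rewrite -[X in (X <= _)%N]HA.
  by apply: mxrankS; rewrite -addsmxE addsmxSr.
elim=> [|r IH] l Hl Hf Hr.
  exists l; split => //; have := rank_lb Hf; move: Hr; rewrite Vk; lia.
have := rank_lb Hf; rewrite Vk => lb.
have [E|NE] := eqVneq (\rank (subm A (tight A l))) (n - k)%N.
  by exists l.
have Hgt : (n - k < \rank (subm A (tight A l)))%N.
  by move: lb NE => /[swap] /eqP; lia.
have [l' [H1 H2 H3]] := descent Hl0 Vk Hl Hf Hgt.
by apply: (IH l' H1 H2); move: Hr H3; lia.
Qed.

End Geo.

Section Final.
Variable R : realFieldType.

Lemma det_ne0 p n m (Mm N : 'M[R]_(p, n)) (V : 'M[R]_n) (B : 'M[R]_(m, n)) :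
  row_free Mm -> (Mm <= B)%MS -> (kerN N == V)%MS -> (V :&: B)%MS == 0 ->
  \det (Mm *m N^T) != 0.
Proof.
move=> rf MB /eqmxP KV cap0; apply/negP => /eqP d0.
have : kermx (Mm *m N^T) != 0.
  by rewrite kermx_eq0 row_free_unit unitmxE d0 unitr0.
case/rowV0Pn => u /sub_kermxP Hu unz.
set y := u *m Mm.
have ynz : y != 0.
  apply/negP => /eqP y0; case/eqP: unz; apply: (row_free_inj rf).
  by rewrite /= mul0mx.
have yV : (y <= V)%MS.
  rewrite -KV /kerN; apply/sub_kermxP; by rewrite /y -mulmxA.
have yB : (y <= B)%MS by apply: submx_trans (submxMl _ _) MB.
have : (y <= V :&: B)%MS by rewrite sub_capmx yV yB.
by rewrite (eqP cap0) submx0 (negPf ynz).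
Qed.

Lemma same_ker p n (N N' : 'M[R]_(p, n)) (V : 'M[R]_n) :
  (p <= n)%N -> \rank V = (n - p)%N -> (kerN N == V)%MS -> (kerN N' == V)%MS ->
  exists G : 'M[R]_p, G \in unitmx /\ N' = G *m N.
Proof.
move=> pn Vr HN HN'.
have rk (X : 'M[R]_(p, n)) : (kerN X == V)%MS -> \rank X = p.
  move=> HX; have := eqmx_rank HX; rewrite /kerN mxrank_ker mxrank_tr Vr.
  have := rank_leq_row X; lia.
set K := kerN N.
have KN : N *m K^T = 0 by rewrite -[N]trmxK -trmx_mul /K /kerN mulmx_ker trmx0.
have rX : \rank (kermx K^T) = p.
  by rewrite mxrank_ker mxrank_tr (eqmx_rank HN) Vr; lia.
have NX : (N == kermx K^T)%MS.
  rewrite -(mxrank_leqif_eq (_ : (N <= kermx K^T)%MS)); last exact/sub_kermxP.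
  by rewrite rX rk.
have KK' : (K <= kerN N')%MS.
  by move/eqmxP: HN' => ->; move/eqmxP: HN => <-.
have N'X : (N' <= kermx K^T)%MS.
  apply/sub_kermxP; case/submxP: KK' => D ->.
  have h : N' *m (kerN N')^T = 0.
    by apply: trmx_inj; rewrite trmx_mul trmxK /kerN mulmx_ker trmx0.
  by rewrite trmx_mul mulmxA h mul0mx.
have N'N : (N' <= N)%MS by move/eqmxP: NX => ->.
exists (N' *m pinvmx N); split; last by rewrite mulmxKpV.
rewrite -row_free_unit /row_free eqn_leq rank_leq_row /=.
by rewrite -{1}(rk N' HN') -{1}(mulmxKpV N'N) mxrankM_maxl.
Qed.

End Final.

Unset Implicit Arguments.

Theorem lemma2p7 (R : realFieldType) (n m k : nat) (A : 'M[R]_(m, n))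
    (M : {set 'I_m} -> 'M[R]_(n - k, n)) :
  pointed_gens A -> full_dim A -> (1 <= k <= n)%N ->
  chow_choice A M ->
  forall V : 'M[R]_n, \rank V = k ->
  forall N : 'M[R]_(n - k, n), (kerN N == V)%MS ->
    (exists S : {set 'I_m},
        [/\ is_face A S, face_rank A S = (n - k)%N & chow_form (M S) N != 0])
    /\
    (forall N' : 'M[R]_(n - k, n), (kerN N' == V)%MS ->
       exists2 c : R, c != 0 &
         forall S : {set 'I_m}, is_face A S -> face_rank A S = (n - k)%N ->
           chow_form (M S) N' = c * chow_form (M S) N).
Proof.
move=> HP Hfd /andP[k1 kn] HM V Vk N HN; split.
  have [l [Hl Hf Hr]] := exists_face HP Hfd Vk.
  have Hface : is_face A (tight A l) by exists l; split.
  exists (tight A l); split => //.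
  have [rf vv] := HM _ Hface Hr.
  rewrite CB; apply: (@det_ne0 _ _ _ _ _ _ V (subm A (tight A l)) rf _ HN).
    apply/row_subP => r; case: (vv r) => T' [_ _ TS [j [c [jT _ _ ->]]]].
    by rewrite scalemx_sub // row_sub_subm // (subsetP TS).
  have := mxrank_sum_cap V (subm A (tight A l)).
  rewrite addsmxE Hf Vk Hr -mxrank_eq0; lia.
move=> N' HN'.
have [G [Gu ->]] := same_ker (leq_subr k n) (etrans Vk (esym (subKn kn))) HN HN'.
exists (\det G); first by rewrite -unitfE -unitmxE.
move=> S _ _; rewrite !CB trmx_mul mulmxA det_mulmx det_tr mulrC //.
Qed.
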